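(* For any integers $k,l\geq 1$, the equation $$[[x_1,\dots,x_k],[x_{k+1},\dots,x_{k+l}]]=\beta_{k+l}({\sf Sum}(C_{k,l}))$$ holds in $\mathbb Z\langle x_1,\dots,x_{k+l}\rangle$.
   Context: $\mathbb Z\langle x_1,\dots,x_m\rangle$ is the free associative ring on $x_1,\dots,x_m$, with bracket $[u,v]=uv-vu$ and left-normed brackets $[u_1,\dots,u_r]=[[u_1,\dots,u_{r-1}],u_r]$. $S_m$ is the symmetric group on $\{1,\dots,m\}$, with product $(\sigma\tau)(i)=\sigma(\tau(i))$. $\gamma_m$ is the additive subgroup spanned by the monomials $x_{\sigma(1)}\cdots x_{\sigma(m)}$, $\sigma\in S_m$; $\beta_m:\gamma_m\to\gamma_m$ is the homomorphism with $\beta_m(x_{\sigma(1)}\cdots x_{\sigma(m)})=[x_{\sigma(1)},\dots,x_{\sigma(m)}]$; for $T\subseteq S_m$, ${\sf Sum}(T)=\sum_{\sigma\in T}x_{\sigma(1)}\cdots x_{\sigma(m)}$. An $(s,t)$-shuffle is a pair $(\alpha,\beta)$ of strictly increasing maps $\alpha:\{1,\dots,s\}\to\{1,\dots,s+t\}$, $\beta:\{1,\dots,t\}\to\{1,\dots,s+t\}$ with disjoint images; ${\sf Sh}^1(s,t)$ is the set of those with $\alpha(1)=1$. For $k,l\geq1$, $0\leq i\leq l-1$ and $(\alpha,\beta)\in{\sf Sh}^1(l-i,i)$, let $\tilde\sigma_{\alpha,\beta,k,l}\in S_{k+l}$ be given by $\tilde\sigma(j)=j$ for $1\leq j\leq k$,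 $\tilde\sigma(k+j)=k+\beta(i+1-j)$ for $1\leq j\leq i$, and $\tilde\sigma(k+i+j)=k+\alpha(j)$ for $1\leq j\leq l-i$; let $\sigma_{\alpha,\beta,k,l}=\tilde\sigma_{\alpha,\beta,k,l}\circ(1,2)^i$, where $(1,2)$ is the transposition. Set $C_{k,l}=\{\sigma_{\alpha,\beta,k,l}\mid 0\leq i\leq l-1,\ (\alpha,\beta)\in{\sf Sh}^1(l-i,i)\}\subseteq S_{k+l}$. *)

(* Defs.v *)
From mathcomp Require Import all_boot all_order all_algebra all_fingroup.
Set Implicit Arguments. Unset Strict Implicit. Unset Printing Implicit Defensive.
Import GRing.Theory.
Local Open Scope ring_scope.

(* Free associative ring Z<x_1, x_2, ...>: an element is represented by a
   finite formal Z-linear combination of words (letters are nats, letter i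
   standing for x_i).  Two representations denote the same element iff all
   coefficients agree ([nceq]). *)
Definition ncpoly := seq (int * seq nat).

Definition ncX (i : nat) : ncpoly := [:: (1%R, [:: i])].
Definition ncadd (p q : ncpoly) : ncpoly := p ++ q.
Definition ncopp (p : ncpoly) : ncpoly := [seq (- t.1, t.2) | t <- p].
Definition ncscale (c : int) (p : ncpoly) : ncpoly := [seq (c * t.1, t.2) | t <- p].
Definition ncmul (p q : ncpoly) : ncpoly :=
  [seq (t.1 * u.1, t.2 ++ u.2) | t <- p, u <- q].
Definition ncbr (u v : ncpoly) : ncpoly := ncadd (ncmul u v) (ncopp (ncmul v u)).
Definition lbr (us : seq ncpoly) : ncpoly :=
  if us is u :: us' then foldl ncbr u us' else [::].

Definition nccoef (p : ncpoly) (w : seq nat) : int := \sum_(t <- p | t.2 == w) t.1.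
Definition nceq (p q : ncpoly) : Prop := forall w, nccoef p w = nccoef q w.

(* beta: the additive map sending a word x_{a_1}...x_{a_r} to [x_{a_1},...,x_{a_r}]
   (defined on all words; restricted to gamma_m it is beta_m). *)
Definition word_br (w : seq nat) : ncpoly := lbr [seq ncX i | i <- w].
Definition betaop (p : ncpoly) : ncpoly :=
  flatten [seq ncscale t.1 (word_br t.2) | t <- p].

(* Sum(T) for T a set of permutations of {1..m}; 'S_m acts on 'I_m = {0..m-1},
   position j (0-based) standing for j+1, letter x_{sigma(j+1)} = (sigma j).+1 *)
Definition Sum m (T : {set 'S_m}) : ncpoly :=
  [seq (1%R, [seq (val (s j)).+1 | j <- enum (ordinal m)]) | s : {perm (ordinal m)} <- enum T].

(* (s,t)-shuffles with alpha(1) = 1, everything 0-based: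
   a : 'I_s -> 'I_n, b : 'I_t -> 'I_n, n = s + t *)
Definition is_shuffle1 s t n (a : {ffun 'I_s -> 'I_n}) (b : {ffun 'I_t -> 'I_n}) : bool :=
  [&& [forall x : 'I_s, forall y : 'I_s, (val x < val y)%N ==> (val (a x) < val (a y))%N],
      [forall x : 'I_t, forall y : 'I_t, (val x < val y)%N ==> (val (b x) < val (b y))%N],
      [forall x : 'I_s, forall y : 'I_t, a x != b y] &
      [forall x : 'I_s, (val x == 0%N) ==> (val (a x) == 0%N)]].

Definition natf s n (f : {ffun 'I_s -> 'I_n}) (q : nat) : nat :=
  if insub q is Some x then val (f x) else 0%N.

Definition sigt k i s t n (a : {ffun 'I_s -> 'I_n}) (b : {ffun 'I_t -> 'I_n}) (p : nat) : nat :=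
  if (p < k)%N then p
  else if (p < k + i)%N then (k + natf b (i.-1 - (p - k)))%N
  else (k + natf a (p - k - i))%N.

Definition swap01 (p : nat) : nat :=
  if p == 0%N then 1%N else if p == 1%N then 0%N else p.
Definition swap01pow (i p : nat) : nat := if odd i then swap01 p else p.

Definition C (k l : nat) : {set 'S_(k + l)} :=
  [set sg : 'S_(k + l) | [exists i : 'I_l,
     [exists a : {ffun 'I_(l - i) -> 'I_l}, [exists b : {ffun 'I_i -> 'I_l},
       is_shuffle1 a b &&
       [forall p : 'I_(k + l), val (sg p) == sigt k i a b (swap01pow i (val p))]]]]].

(* Main.v *)
Require Import Defs.
From mathcomp Require Import all_boot all_order all_algebra all_fingroup.
From mathcomp Require Import ring zify.
Set Implicit Arguments. Unset Strict Implicit. Unset Printing Implicit Defensive.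
Import GRing.Theory.
Local Open Scope ring_scope.

Lemma coef_cat p q w : nccoef (ncadd p q) w = nccoef p w + nccoef q w.
Proof. by rewrite /nccoef /ncadd big_cat. Qed.

Lemma coef_opp p w : nccoef (ncopp p) w = - nccoef p w.
Proof. by rewrite /nccoef /ncopp big_map /= sumrN. Qed.

Lemma coef_scale c p w : nccoef (ncscale c p) w = c * nccoef p w.
Proof. by rewrite /nccoef /ncscale big_map /= mulr_sumr. Qed.

Lemma coef_flatten ps w : nccoef (flatten ps) w = \sum_(p <- ps) nccoef p w.
Proof.
elim: ps => [|p ps IH] /=; first by rewrite /nccoef !big_nil.
by rewrite big_cons -IH -coef_cat.
Qed.

Lemma coefE p w : nccoef p w = \sum_(t <- p) (if t.2 == w then t.1 else 0).
Proof. by rewrite /nccoef big_mkcond. Qed.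

Lemma coef_mulE p q w : nccoef (ncmul p q) w =
  \sum_(t <- p) \sum_(u <- q) (if t.2 ++ u.2 == w then t.1 * u.1 else 0).
Proof.
rewrite coefE /ncmul big_allpairs_dep /=. done.
Qed.

Lemma coef_mul_conv p q w : nccoef (ncmul p q) w =
  \sum_(j < (size w).+1) nccoef p (take j w) * nccoef q (drop j w).
Proof.
rewrite coef_mulE; symmetry.
under eq_bigr => j _ do rewrite !coefE mulr_suml; rewrite exchange_big /=.
apply: eq_bigr => t _.
under eq_bigr => j _ do rewrite mulr_sumr; rewrite exchange_big /=.
apply: eq_bigr => u _; symmetry.
case: eqP => [<-|ne].
  have hs : (size t.2 < (size (t.2 ++ u.2)).+1)%N by rewrite size_cat ltnS leq_addr.
  rewrite (bigD1 (Ordinal hs)) //= take_size_cat // drop_size_cat // !eqxx.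
  rewrite big1 ?addr0 // => j; rewrite -val_eqE /= => hj.
  case: eqP => [ht|]; last by rewrite mul0r.
  exfalso; move/negP: hj; apply.
  have := size_take j (t.2 ++ u.2); rewrite -ht.
  have := ltn_ord j; rewrite ltnS leq_eqVlt => /orP[/eqP ->|->]; last by move=> ->.
  by rewrite ltnn => ->.
rewrite big1 // => j _.
case: eqP => [ht|]; last by rewrite mul0r.
case: eqP => [hu|]; last by rewrite mulr0.
by exfalso; apply: ne; rewrite ht hu cat_take_drop.
Qed.

Lemma coef_mulDl p p' q w : nccoef (ncmul (ncadd p p') q) w = nccoef (ncmul p q) w + nccoef (ncmul p' q) w.
Proof. by rewrite !coef_mulE /ncadd big_cat. Qed.
Lemma coef_mulDr p q q' w : nccoef (ncmul p (ncadd q q')) w = nccoef (ncmul p q) w + nccoef (ncmul p q') w.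
Proof. by rewrite !coef_mulE -big_split /=; apply: eq_bigr => t _; rewrite /ncadd big_cat. Qed.
Lemma coef_mulNl p q w : nccoef (ncmul (ncopp p) q) w = - nccoef (ncmul p q) w.
Proof.
rewrite !coef_mulE /ncopp big_map -sumrN; apply: eq_bigr => t _ /=.
rewrite -sumrN; apply: eq_bigr => u _; case: ifP => _; by rewrite ?mulNr ?oppr0.
Qed.
Lemma coef_mulNr p q w : nccoef (ncmul p (ncopp q)) w = - nccoef (ncmul p q) w.
Proof.
rewrite !coef_mulE -sumrN; apply: eq_bigr => t _ /=.
rewrite /ncopp big_map -sumrN; apply: eq_bigr => u _; case: ifP => _; by rewrite ?mulrN ?oppr0.
Qed.
Lemma coef_mulA p q r w : nccoef (ncmul p (ncmul q r)) w = nccoef (ncmul (ncmul p q) r) w.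
Proof.
rewrite !coef_mulE /ncmul big_allpairs_dep /=.
apply: eq_bigr => t _.
rewrite big_allpairs_dep /=; apply: eq_bigr => u _; apply: eq_bigr => v _ /=.
by rewrite catA mulrA; case: ifP; rewrite ?mulr0.
Qed.

Lemma coef_br u v w : nccoef (ncbr u v) w = nccoef (ncmul u v) w - nccoef (ncmul v u) w.
Proof. by rewrite /ncbr coef_cat coef_opp. Qed.

Lemma ceq_mul p p' q q' : nceq p p' -> nceq q q' -> nceq (ncmul p q) (ncmul p' q').
Proof.
move=> hp hq w; rewrite !coef_mul_conv; apply: eq_bigr => j _; by rewrite hp hq.
Qed.

Lemma ceq_br p p' q q' : nceq p p' -> nceq q q' -> nceq (ncbr p q) (ncbr p' q').
Proof.
move=> hp hq w; rewrite !coef_br; by rewrite (ceq_mul hp hq) (ceq_mul hq hp).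
Qed.

Lemma coef_brDl a b c w : nccoef (ncbr (ncadd a b) c) w = nccoef (ncbr a c) w + nccoef (ncbr b c) w.
Proof. rewrite !coef_br coef_mulDl coef_mulDr. ring. Qed.

Lemma jacobi u L z : nceq (ncbr u (ncbr L z))
  (ncadd (ncbr (ncbr u L) z) (ncopp (ncbr (ncbr u z) L))).
Proof.
move=> w; rewrite /ncbr.
rewrite !(coef_cat, coef_opp, coef_mulDl, coef_mulDr, coef_mulNl, coef_mulNr, coef_mulA).
ring.
Qed.

Lemma ceq_refl p : nceq p p. Proof. by []. Qed.

Lemma ceq_foldl a b t : nceq a b -> nceq (foldl ncbr a t) (foldl ncbr b t).
Proof.
elim: t a b => [|x t IH] a b hab //=; apply: IH; exact: ceq_br.
Qed.

Lemma coef_foldlD a b t w : nccoef (foldl ncbr (ncadd a b) t) w =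
  nccoef (foldl ncbr a t) w + nccoef (foldl ncbr b t) w.
Proof.
elim: t a b => [|x t IH] a b /=; first by rewrite coef_cat.
rewrite -IH; apply: ceq_foldl => w'; by rewrite coef_cat coef_brDl.
Qed.

Lemma coef_foldlN a t w : nccoef (foldl ncbr (ncopp a) t) w = - nccoef (foldl ncbr a t) w.
Proof.
elim: t a => [|x t IH] a /=; first by rewrite coef_opp.
rewrite -IH; apply: ceq_foldl => w'.
rewrite coef_opp !coef_br coef_mulNl coef_mulNr; ring.
Qed.

Fixpoint Vs (n : nat) : seq (seq nat) :=
  if n is n'.+1 then [seq rcons v n | v <- Vs n'] ++ [seq n :: v | v <- Vs n']
  else [:: [:: 0%N]].

Definition sgn (v : seq nat) : int := (-1) ^+ (index 0%N v).

Lemma Vs_has0 n v : v \in Vs n -> 0%N \in v.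
Proof.
elim: n v => [|n IH] v /=; first by rewrite inE => /eqP ->.
rewrite mem_cat => /orP[] /mapP[v' hv' ->].
  by rewrite mem_rcons inE (IH _ hv') orbT.
by rewrite inE (IH _ hv') orbT.
Qed.

Lemma expansion (Y : nat -> ncpoly) n u tail :
  nceq (foldl ncbr (ncbr u (lbr [seq Y j | j <- iota 0 n.+1])) tail)
       (flatten [seq ncscale (sgn v) (foldl ncbr u ([seq Y j | j <- v] ++ tail)) | v <- Vs n]).
Proof.
elim: n u tail => [|n IH] u tail w.
  by rewrite /= coef_cat /sgn /= expr0 coef_scale mul1r /nccoef big_nil addr0.
have -> : lbr [seq Y j | j <- iota 0 n.+2] = ncbr (lbr [seq Y j | j <- iota 0 n.+1]) (Y n.+1).
  have -> : iota 0 n.+2 = rcons (iota 0 n.+1) n.+1.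
    by rewrite -cats1 -[n.+2]addn1 iotaD.
  by rewrite map_rcons /lbr /= -cats1 foldl_cat.
rewrite (ceq_foldl _ (jacobi _ _ _)) coef_foldlD coef_foldlN /=.
rewrite (IH u (Y n.+1 :: tail)) (IH (ncbr u (Y n.+1)) tail).
rewrite coef_flatten /= map_cat flatten_cat coef_cat !coef_flatten !big_map.
rewrite -sumrN; congr (_ + _).
  rewrite big_seq_cond [in RHS]big_seq_cond; apply: eq_bigr => v /andP[hv _].
  rewrite !coef_scale map_rcons cat_rcons /sgn -cats1 index_cat (Vs_has0 hv).
  done.
apply: eq_bigr => v _.
rewrite !coef_scale /sgn /= exprS mulN1r mulNr.
done.
Qed.

Local Open Scope nat_scope.

Definition gtr : rel nat := fun x y => y < x.
Lemma gtr_trans : transitive gtr.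
Proof. move=> x y z; rewrite /gtr => h1 h2; exact: ltn_trans h2 h1. Qed.

Definition valley n (v : seq nat) :=
  [&& perm_eq v (iota 0 n.+1), sorted gtr (take (index 0 v) v) &
      sorted ltn (drop (index 0 v) v)].

Lemma iotaSr n : iota 0 n.+1 = rcons (iota 0 n) n.
Proof. by rewrite -cats1 -addn1 iotaD. Qed.

Lemma sorted_rcons_lt s m : sorted ltn s -> all (fun x => x < m) s -> sorted ltn (rcons s m).
Proof.
case: s => [|x s] //= hs /andP[hx ha]; rewrite rcons_path hs /=.
have := mem_last x s; rewrite inE => /orP[/eqP ->//|h].
exact: (allP ha).
Qed.

Lemma valley_lt n v x : valley n v -> x \in v -> x < n.+1.
Proof. by case/and3P=> /perm_mem -> _ _; rewrite mem_iota. Qed.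

Lemma valley0 n v : valley n v -> 0 \in v.
Proof. by case/and3P=> /perm_mem -> _ _; rewrite mem_iota. Qed.

Lemma valley_size n v : valley n v -> size v = n.+1.
Proof. by case/and3P=> /perm_size -> _ _; rewrite size_iota. Qed.

Lemma Vs_valley n v : v \in Vs n -> valley n v.
Proof.
elim: n v => [|n IH] v /=; first by rewrite inE => /eqP ->.
rewrite mem_cat => /orP[] /mapP[v' /IH hv' ->]; have h0 := valley0 hv';
  have hlt := valley_lt hv'; case/and3P: hv' => hp ht hd.
  have hi : index 0 (rcons v' n.+1) = index 0 v' by rewrite -cats1 index_cat h0.
  apply/and3P; split; rewrite ?hi.
  - by rewrite iotaSr -!cats1 perm_cat2r.
  - by rewrite -cats1 takel_cat // ltnW // index_mem.
  rewrite -cats1 drop_cat index_mem h0 cats1; apply: sorted_rcons_lt => //.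
  by apply/allP => x /mem_drop /hlt.
have hi : index 0 (n.+1 :: v') = (index 0 v').+1 by [].
apply/and3P; split; rewrite ?hi //.
- by rewrite iotaSr perm_sym perm_rcons perm_cons perm_sym.
rewrite /= path_sortedE ?ht ?andbT; last exact: gtr_trans.
by apply/allP => x /mem_take /hlt.
Qed.

Lemma valley_Vs n v : valley n v -> v \in Vs n.
Proof.
elim: n v => [|n IH] v hv.
  have hs := valley_size hv; have h0 := valley0 hv.
  case: v hs h0 {hv} => [|x [|]] //= _; rewrite !inE => /eqP <-; by [].
have hs := valley_size hv; have h0 := valley0 hv; have hlt := valley_lt hv.
move: (hv) => /and3P[hp ht hd].
have hm : n.+1 \in v by rewrite (perm_mem hp) mem_iota add0n ltnSn.
have hiv : nth 0 v (index 0 v) = 0 by rewrite nth_index.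
have his : index 0 v < size v by rewrite index_mem.
move Ei: (index 0 v) ht hd hiv his => i ht hd hiv his.
have hjv : nth 0 v (index n.+1 v) = n.+1 by rewrite nth_index.
have hjs : index n.+1 v < size v by rewrite index_mem.
move Ej: (index n.+1 v) hjv hjs => j hjv hjs.
have hij : j != i by apply/eqP => e; move: hjv; rewrite e hiv.
case: (ltngtP j i) => [hji|hji|]; last by move/eqP; rewrite (negbTE hij).
-
  have j0 : j = 0.
    case: j hji hjv hij {hjs Ej} => // j hji hjv _.
    have := sorted_ltn_nth gtr_trans 0 ht.
    move=> /(_ j j.+1); rewrite !inE size_take his => /(_ (ltn_trans (ltnSn j) hji) hji (ltnSn j)).
    rewrite !nth_take // ?(ltn_trans (ltnSn j) hji) // hjv /gtr.
    by rewrite ltnNge -ltnS hlt // mem_nth // (ltn_trans (ltnSn j) (ltn_trans hji his)).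
  have [v' ev] : exists v', v = n.+1 :: v'.
    case: v hjv j0 {hv hs h0 hlt hm hp ht hd hiv his Ei Ej hjs} => [|x v'] hjv j0.
      by move: hjv; rewrite j0.
    by exists v'; move: hjv; rewrite j0 /= => ->.
  subst v; rewrite mem_cat; apply/orP; right; apply: map_f; apply: IH.
  have hi : i = (index 0 v').+1 by rewrite -Ei.
  rewrite hi /= in ht hd.
  apply/and3P; split => //.
  + by move: hp; rewrite iotaSr perm_sym perm_rcons perm_cons perm_sym.
  + by move: ht; rewrite path_sortedE; [case/andP|exact: gtr_trans].
-
  have jm : j = n.+1.
    apply/eqP; rewrite eqn_leq -ltnS -hs hjs /= ltnNge; apply/negP => hjn.
    have := sorted_ltn_nth ltn_trans 0 hd.
    have hj1 : j.+1 < size v by rewrite hs !ltnS.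
    move=> /(_ (j - i) (j.+1 - i)); rewrite !inE size_drop.
    rewrite ltn_sub2r // ?(ltn_trans hji) // ltn_sub2r // ?(ltn_trans hji) // subSn ?(ltnW hji) //.
    move=> /(_ isT isT (ltnSn _)); rewrite !nth_drop subnKC ?(ltnW hji) //.
    rewrite -subSn ?(ltnW hji) // subnKC ?(ltnW (ltn_trans hji (ltnSn j))) // hjv.
    by rewrite ltnNge -ltnS hlt // mem_nth.
  have [v' ev] : exists v', v = rcons v' n.+1.
    move: hjv hs {hv h0 hlt hm hp ht hd hiv his Ei Ej hjs}; rewrite jm.
    case/lastP: v => [//|v' x] hjv hs.
    have hsv : size v' = n.+1 by move: hs; rewrite size_rcons => -[].
    by exists v'; move: hjv; rewrite nth_rcons hsv ltnn eqxx => ->.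
  subst v; rewrite mem_cat; apply/orP; left; apply: map_f; apply: IH.
  have h0' : 0 \in v' by move: h0; rewrite mem_rcons inE.
  have hi : i = index 0 v' by rewrite -Ei -cats1 index_cat h0'.
  rewrite hi in ht hd.
  apply/and3P; split.
  + by move: hp; rewrite iotaSr -!cats1 perm_cat2r.
  + by move: ht; rewrite -cats1 takel_cat // ltnW // index_mem.
  + by move: hd; rewrite -cats1 drop_cat index_mem h0' => /cat_sorted2 [].
Qed.

Lemma Vs_uniq n : uniq (Vs n).
Proof.
elim: n => [|n IH] //=.
have inj2 : injective (cons n.+1) by move=> x y [].
rewrite cat_uniq (map_inj_uniq (@rcons_injl _ n.+1)) (map_inj_uniq inj2) IH /= andbT.
apply/hasPn => _ /mapP[v hv ->]; apply/negP => /mapP[v' hv' e].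
have hl := valley_lt (Vs_valley hv').
case: v' hv' hl e => [|y v'] hv0 hl /=.
  by move=> [] ev; move: (Vs_has0 hv); rewrite ev.
case=> ey _; by have := hl y; rewrite inE -ey eqxx ltnn => /(_ isT).
Qed.

Definition vseq l i s t (a : {ffun 'I_s -> 'I_l}) (b : {ffun 'I_t -> 'I_l}) : seq nat :=
  [seq (if q < i then natf b (i.-1 - q) else natf a (q - i)) | q <- iota 0 l].
Arguments vseq l i {s t} a b.
Definition mkw k (v : seq nat) := iota 1 k ++ [seq k.+1 + j | j <- v].
Definition sw2 (w : seq nat) := if w is x :: y :: r then y :: x :: r else w.
Definition swv k i v := if odd i then sw2 (mkw k v) else mkw k v.
Definition pword m (s : 'S_m) : seq nat := [seq (val (s j)).+1 | j <- enum 'I_m].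

Lemma natfE s n (f : {ffun 'I_s -> 'I_n}) q (h : q < s) : natf f q = val (f (Ordinal h)).
Proof. by rewrite /natf insubT. Qed.

Lemma nth_sw2 w p : 1 < size w -> nth 0 (sw2 w) p = nth 0 w (swap01 p).
Proof.
case: w => [|x [|y r]] //= _; rewrite /swap01.
by case: p => [|[|p]].
Qed.

Lemma swap01pow_lt i p n : 1 < n -> p < n -> swap01pow i p < n.
Proof.
rewrite /swap01pow /swap01; case: (odd i) => // h1 hp.
case: eqP => // _; case: eqP => // _; exact: ltnW.
Qed.

Lemma size_mkw k v : size (mkw k v) = k + size v.
Proof. by rewrite /mkw size_cat size_iota size_map. Qed.

Lemma nth_mkw k v q : q < k + size v ->
  nth 0 (mkw k v) q = if q < k then q.+1 else k.+1 + nth 0 v (q - k).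
Proof.
move=> hq; rewrite /mkw nth_cat size_iota; case: ifP => hqk.
  by rewrite nth_iota // add1n.
rewrite (nth_map 0) //; move/negbT: hqk; rewrite -leqNgt => hk; lia.
Qed.

Lemma K2 k l i s t (a : {ffun 'I_s -> 'I_l}) (b : {ffun 'I_t -> 'I_l}) p :
  0 < k -> 0 < l -> p < k + l ->
  (sigt k i a b (swap01pow i p)).+1 = nth 0 (swv k i (vseq l i a b)) p.
Proof.
move=> hk hl hp.
have hsz : size (vseq l i a b) = l by rewrite size_map size_iota.
have -> : nth 0 (swv k i (vseq l i a b)) p = nth 0 (mkw k (vseq l i a b)) (swap01pow i p).
  rewrite /swv /swap01pow; case: (odd i) => //; rewrite nth_sw2 // size_mkw hsz; lia.
have hq : swap01pow i p < k + l by apply: swap01pow_lt => //; lia.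
move: hq; set q := swap01pow i p => hq.
rewrite nth_mkw; last by rewrite hsz.
rewrite /sigt; case: ifP => hqk //.
rewrite (nth_map 0) ?size_iota; last lia.
rewrite nth_iota; last lia.
rewrite add0n; case: ifP => hqi; case: ifP => hqi'; lia.
Qed.

Lemma natf_lt s n (f : {ffun 'I_s -> 'I_n}) q : 0 < n -> natf f q < n.
Proof. move=> hn; rewrite /natf; case: (insub q) => [x|] //; exact: ltn_ord. Qed.

Lemma shuffle_facts s t n (a : {ffun 'I_s -> 'I_n}) (b : {ffun 'I_t -> 'I_n}) :
  is_shuffle1 a b ->
  [/\ forall x y, x < y -> y < s -> natf a x < natf a y,
      forall x y, x < y -> y < t -> natf b x < natf b y,
      forall x y, x < s -> y < t -> natf a x != natf b y &
      0 < s -> natf a 0 = 0].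
Proof.
case/and4P => /forallP H1 /forallP H2 /forallP H3 /forallP H4; split.
- move=> x y hxy hy; have hx := ltn_trans hxy hy.
  rewrite (natfE _ hx) (natfE _ hy).
  by move: (H1 (Ordinal hx)) => /forallP /(_ (Ordinal hy)) /implyP; apply.
- move=> x y hxy hy; have hx := ltn_trans hxy hy.
  rewrite (natfE _ hx) (natfE _ hy).
  by move: (H2 (Ordinal hx)) => /forallP /(_ (Ordinal hy)) /implyP; apply.
- move=> x y hx hy; rewrite (natfE _ hx) (natfE _ hy).
  by move: (H3 (Ordinal hx)) => /forallP /(_ (Ordinal hy)).
- move=> hs; rewrite (natfE _ hs).
  by move: (H4 (Ordinal hs)) => /implyP /(_ isT) /eqP.
Qed.

Lemma sorted_map_iota (r : rel nat) f m n :
  (forall q, q.+1 < n -> r (f (m + q)) (f (m + q.+1))) -> sorted r [seq f x | x <- iota m n].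
Proof.
move=> h; apply/(sortedP 0) => q; rewrite size_map size_iota => hq.
rewrite !(nth_map 0) ?size_iota ?(ltn_trans (ltnSn q)) // !nth_iota ?(ltn_trans (ltnSn q)) //.
exact: h.
Qed.

Lemma K1 l (i : nat) (a : {ffun 'I_(l - i) -> 'I_l}) (b : {ffun 'I_i -> 'I_l}) :
  i < l -> is_shuffle1 a b ->
  valley l.-1 (vseq l i a b) /\ index 0 (vseq l i a b) = i.
Proof.
move=> hil /shuffle_facts [H1 H2 H3 H4].
have hl : 0 < l by lia.
set f := fun q => if q < i then natf b (i.-1 - q) else natf a (q - i).
have hv : vseq l i a b = [seq f q | q <- iota 0 l] by [].
have finj : {in iota 0 l &, injective f}.
  move=> x y; rewrite !mem_iota !add0n => /andP[_ hx] /andP[_ hy]; rewrite /f.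
  case: ifP => hxi; case: ifP => hyi => e.
  - case: (ltngtP x y) => // hxy; [have := H2 (i.-1 - y) (i.-1 - x) | have := H2 (i.-1 - x) (i.-1 - y)];
      by rewrite e ltnn => /(_ ltac:(lia) ltac:(lia)).
  - by have := H3 (y - i) (i.-1 - x); rewrite e eqxx => /(_ ltac:(lia) ltac:(lia)).
  - by have := H3 (x - i) (i.-1 - y); rewrite e eqxx => /(_ ltac:(lia) ltac:(lia)).
  - case: (ltngtP x y) => // hxy; [have := H1 (x - i) (y - i) | have := H1 (y - i) (x - i)];
      by rewrite e ltnn => /(_ ltac:(lia) ltac:(lia)).
have hu : uniq (vseq l i a b) by rewrite hv map_inj_in_uniq // iota_uniq.
have hperm : perm_eq (vseq l i a b) (iota 0 l).
  apply: uniq_perm => //; first exact: iota_uniq.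
  have hsub : {subset vseq l i a b <= iota 0 l}.
    move=> x /mapP[q _ ->]; rewrite mem_iota add0n /f; case: ifP => _; exact: natf_lt.
  by have [] := uniq_min_size hu hsub; rewrite size_map !size_iota.
have hsz : size (vseq l i a b) = l by rewrite size_map size_iota.
have hidx : index 0 (vseq l i a b) = i.
  have <- : nth 0 (vseq l i a b) i = 0.
    by rewrite hv (nth_map 0) ?size_iota // nth_iota // add0n /f ltnn subnn H4 //; lia.
  by rewrite index_uniq // hsz.
split => //; apply/and3P; split; rewrite ?prednK ?hidx //.
- rewrite hv -map_take take_iota; apply: sorted_map_iota => q hq.
  rewrite /gtr /f add0n !ifT; try lia.
  apply: H2; lia.
- rewrite hv -map_drop drop_iota add0n; apply: sorted_map_iota => q hq.
  rewrite /f !ifF; try lia.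
  apply: H1; lia.
Qed.

Lemma K3 l v : 0 < l -> valley l.-1 v ->
  exists i : 'I_l, exists a : {ffun 'I_(l - i) -> 'I_l}, exists b : {ffun 'I_i -> 'I_l},
    [/\ is_shuffle1 a b, vseq l i a b = v & index 0 v = i].
Proof.
move=> hl hval.
have hsz : size v = l by rewrite (valley_size hval) prednK.
have hvlt : forall j, nth 0 v j < l.
  move=> j; case: (ltnP j (size v)) => hj; last by rewrite nth_default.
  by rewrite -(prednK hl) (valley_lt hval) // mem_nth.
have h0 := valley0 hval.
have hi : index 0 v < l by rewrite -hsz index_mem.
have hu : uniq v by case/and3P: hval => /perm_uniq -> _ _; exact: iota_uniq.
case/and3P: hval => _ ht hd.
set i0 := index 0 v in hi ht hd *.
exists (Ordinal hi).
exists [ffun q : 'I_(l - i0) => Ordinal (hvlt (i0 + q))].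
exists [ffun q : 'I_i0 => Ordinal (hvlt (i0.-1 - q))].
have ea : forall q, q < l - i0 -> natf [ffun q : 'I_(l - i0) => Ordinal (hvlt (i0 + q))] q = nth 0 v (i0 + q).
  by move=> q hq; rewrite (natfE _ hq) ffunE.
have eb : forall q, q < i0 -> natf [ffun q : 'I_i0 => Ordinal (hvlt (i0.-1 - q))] q = nth 0 v (i0.-1 - q).
  by move=> q hq; rewrite (natfE _ hq) ffunE.
split => //=.
- apply/and4P; split; apply/forallP => x; try apply/forallP => y.
  + apply/implyP => hxy; rewrite !ffunE /=.
    have := sorted_ltn_nth ltn_trans 0 hd; move=> /(_ x y); rewrite !inE size_drop hsz !nth_drop.
    by apply; rewrite ?ltn_ord.
  + apply/implyP => hxy; rewrite !ffunE /=.
    have := sorted_ltn_nth gtr_trans 0 ht; rewrite /gtr.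
    have hy := ltn_ord y; have hx := ltn_ord x; have hxy' : x < y := hxy.
    move=> /(_ (i0.-1 - y) (i0.-1 - x)); rewrite !inE size_take hsz hi !nth_take; try lia.
  + rewrite -val_eqE !ffunE /=; have hy := ltn_ord y; have hx := ltn_ord x.
    rewrite nth_uniq // ?hsz; lia.
  + apply/implyP => /eqP hx0; rewrite ffunE /= hx0 addn0 nth_index //.
- apply: (@eq_from_nth _ 0); first by rewrite size_map size_iota hsz.
  move=> q; rewrite size_map size_iota => hq.
  rewrite (nth_map 0) ?size_iota // nth_iota // add0n.
  case: ifP => hqi.
    rewrite eb; last lia.
    congr nth; lia.
  rewrite ea; last lia.
  congr nth; lia.
Qed.

Lemma perm_sw2 w : perm_eq (sw2 w) w.
Proof. case: w => [|x [|y r]] //=; apply/seq.permP => P /=; lia. Qed.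

Lemma perm_swv k l i v : perm_eq v (iota 0 l) -> perm_eq (swv k i v) (iota 1 (k + l)).
Proof.
move=> hp.
have hm : perm_eq (mkw k v) (iota 1 (k + l)).
  rewrite /mkw iotaD add1n; apply: perm_cat => //.
  by rewrite -[k.+1]addn0 iotaDl addn0; apply: perm_map.
rewrite /swv; case: (odd i) => //; exact: perm_trans (perm_sw2 _) hm.
Qed.

Lemma mkw_inj k : injective (mkw k).
Proof.
move=> v v' e; have := congr1 (drop k) e.
rewrite /mkw !drop_size_cat ?size_iota //.
apply: inj_map => x y /=; exact: addnI.
Qed.

Lemma head_swv k i v : 0 < k -> 0 < size v -> (head 0 (swv k i v) == 1) = ~~ odd i.
Proof.
move=> hk hv; rewrite /swv.
have e : mkw k v = 1 :: (if 1 < k then 2 else k.+1 + head 0 v) :: drop 2 (mkw k v).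
  case: k hk => // k _; rewrite /mkw /=; case: k => [|k] /=.
    by case: v hv => [|x v'] //= _; rewrite drop0.
  by rewrite drop0.
case: (odd i) => /=; rewrite e //=.
by case: ifP => //; case: k hk e => [|[|k]].
Qed.

Lemma swv_inj k l v v' : 0 < k -> v \in Vs l -> v' \in Vs l ->
  swv k (index 0 v) v = swv k (index 0 v') v' -> v = v'.
Proof.
move=> hk hv hv' e.
have sz1 : 0 < size v by rewrite (valley_size (Vs_valley hv)).
have sz2 : 0 < size v' by rewrite (valley_size (Vs_valley hv')).
have hpar : odd (index 0 v) = odd (index 0 v').
  apply: negb_inj; by rewrite -(head_swv _ hk sz1) -(head_swv _ hk sz2) e.
have sw2K : forall w, sw2 (sw2 w) = w by case=> [|x [|y r]].
move: e; rewrite /swv hpar; case: (odd _) => e; apply: (@mkw_inj k) => //.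
by rewrite -[mkw k v]sw2K e sw2K.
Qed.

Lemma nth_pword m (s : 'S_m) p (hp : p < m) : nth 0 (pword s) p = (val (s (Ordinal hp))).+1.
Proof.
rewrite /pword (nth_map (Ordinal hp)) ?size_enum_ord //.
by rewrite (nth_ord_enum (Ordinal hp) (Ordinal hp)).
Qed.

Lemma size_pword m (s : 'S_m) : size (pword s) = m.
Proof. by rewrite /pword size_map size_enum_ord. Qed.

Lemma size_swv k i v : size (swv k i v) = k + size v.
Proof.
rewrite /swv; case: (odd i); rewrite ?size_mkw //.
by rewrite (perm_size (perm_sw2 _)) size_mkw.
Qed.

Lemma mainperm k l : 0 < k -> 0 < l ->
  perm_eq [seq pword s | s <- enum (C k l)] [seq swv k (index 0 v) v | v <- Vs l.-1].
Proof.
move=> hk hl.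
apply: uniq_perm.
- rewrite map_inj_uniq ?enum_uniq // => s s' /eq_in_map e.
  apply/permP => j; apply/val_inj; have := e j (mem_enum _ j).
  by move=> [].
- rewrite map_inj_in_uniq; [exact: Vs_uniq|]; move=> v v' hv hv'; exact: (swv_inj hk hv hv').
move=> x; apply/mapP/mapP.
- case=> s; rewrite mem_enum inE => /existsP[i /existsP[a /existsP[b /andP[hsh /forallP hall]]]] ->.
  have [hval hidx] := K1 (ltn_ord i) hsh.
  exists (vseq l i a b); first exact: valley_Vs.
  rewrite hidx; apply: (@eq_from_nth _ 0).
    by rewrite size_swv /vseq size_pword size_map size_iota.
  move=> p; rewrite size_pword => hp.
  rewrite (nth_pword s hp) (eqP (hall (Ordinal hp))) /=.
  exact: K2.
- case=> v hv ->.
  have hval := Vs_valley hv.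
  have [i [a [b [hsh hvs hidx]]]] := K3 hl hval.
  have hperm : perm_eq v (iota 0 l) by case/and3P: hval; rewrite prednK.
  have hpw := perm_swv k (index 0 v) hperm.
  have hsz : size (swv k (index 0 v) v) = k + l by rewrite (perm_size hpw) size_iota.
  have hb : forall p : 'I_(k + l), sigt k i a b (swap01pow i p) < k + l.
    move=> p; rewrite -ltnS (K2 i a b hk hl (ltn_ord p)) hvs -hidx.
    have : nth 0 (swv k (index 0 v) v) p \in iota 1 (k + l).
      by rewrite -(perm_mem hpw) mem_nth // hsz.
    by rewrite mem_iota add1n => /andP[].
  pose f := fun p : 'I_(k + l) => Ordinal (hb p).
  have finj : injective f.
    move=> p p' /(congr1 val) /= e.
    have hu : uniq (swv k (index 0 v) v) by rewrite (perm_uniq hpw) iota_uniq.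
    have h1 : (p : nat) < size (swv k (index 0 v) v) by rewrite hsz.
    have h2 : (p' : nat) < size (swv k (index 0 v) v) by rewrite hsz.
    apply/val_inj/eqP; rewrite -(nth_uniq 0 h1 h2 hu).
    by rewrite hidx -hvs -(K2 i a b hk hl (ltn_ord p)) -(K2 i a b hk hl (ltn_ord p')) e.
  exists (perm finj).
    rewrite mem_enum inE; apply/existsP; exists i; apply/existsP; exists a; apply/existsP; exists b.
    by rewrite hsh /=; apply/forallP => p; rewrite permE.
  apply: (@eq_from_nth _ 0).
    by rewrite hsz size_pword.
  move=> p; rewrite hsz => hp.
  rewrite (nth_pword _ hp) permE /= (K2 i a b hk hl hp) hvs hidx.
  done.
Qed.

Local Open Scope ring_scope.

Lemma coef_sw2 w0 x : (1 < size w0)%N ->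
  nccoef (word_br (sw2 w0)) x = - nccoef (word_br w0) x.
Proof.
case: w0 => [|a [|b r]] //= _.
rewrite /word_br /lbr /= -coef_foldlN; apply: ceq_foldl => y.
by rewrite coef_opp !coef_br opprB.
Qed.

Lemma word_br_mkw k v : (0 < k)%N ->
  word_br (mkw k v) = foldl ncbr (lbr [seq ncX i | i <- iota 1 k]) [seq ncX (k.+1 + j) | j <- v].
Proof.
case: k => // k _; rewrite /word_br /mkw map_cat /= foldl_cat -map_comp.
done.
Qed.

Theorem lemma3 (k l : nat) (hk : (1 <= k)%N) (hl : (1 <= l)%N) :
  nceq (ncbr (lbr [seq ncX i | i <- iota 1 k])
             (lbr [seq ncX i | i <- iota k.+1 l]))
       (betaop (Sum (C k l))).
Proof.
move=> w.
set u := lbr [seq ncX i | i <- iota 1 k].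
have eY : [seq ncX i | i <- iota k.+1 l] = [seq (fun j => ncX (k.+1 + j)) j | j <- iota 0 l.-1.+1].
  by rewrite prednK // -[k.+1]addn0 iotaDl addn0 -map_comp.
have h := expansion (fun j => ncX (k.+1 + j)) l.-1 u [::] w.
rewrite eY; rewrite [LHS](_ : _ = nccoef (foldl ncbr (ncbr u (lbr [seq ncX (k.+1 + j) | j <- iota 0 l.-1.+1])) [::]) w) //.
rewrite h.
rewrite /betaop /Sum -map_comp !coef_flatten !big_map /=.
under [in RHS]eq_bigr => s _ do rewrite coef_scale mul1r.
rewrite -(big_map (@pword (k + l)) xpredT (fun x => nccoef (word_br x) w)).
rewrite (perm_big _ (mainperm hk hl)) big_map.
rewrite big_seq_cond [in RHS]big_seq_cond; apply: eq_bigr => v /andP[hv _].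
have hsv := valley_size (Vs_valley hv).
rewrite coef_scale cats0 -word_br_mkw // /swv /sgn -signr_odd.
case: (odd _); last by rewrite expr0 mul1r.
rewrite expr1 mulN1r coef_sw2 // size_mkw hsv; lia.
Qed.
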